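(* Let $A=\Bbbk Q/I$ be a finite-dimensional triangular monomial algebra, let $n\ge 0$, and let $x=\sum_{i=1}^k\alpha_i\,(p_i\|b_i)\in\Bbbk(\Gamma_n\|\mathcal B)$ be an irreducible cocycle (with $\alpha_i\in\Bbbk$ nonzero and the pairs $(p_i,b_i)$ pairwise distinct). Then there exist nontrivial paths $\tilde p$ and $\tilde b$ such that for every $1\le i\le k$ there are $a_i,c_i\in\mathcal B$ with $p_i=c_i\,\tilde p\,a_i$ and $b_i=c_i\,\tilde b\,a_i$.
   Context: Let $\Bbbk$ be a field, $Q=(Q_0,Q_1,s,t)$ a finite quiver, and $A=\Bbbk Q/I$ a finite-dimensional monomial algebra, i.e. $I$ is an ideal generated by paths of length at least $2$. $A$ is triangular if $Q$ has no oriented cycles. Let $E=\Bbbk Q_0$, $A^e=A\otimes_\Bbbk A^{\mathrm{op}}$. Paths are written from right to left ($p=\alpha_n\cdots\alpha_1$, $t(\alpha_i)=s(\alpha_{i+1})$); $qp$ is concatenation. $\mathcal B$ = set of paths not in $I$ (a basis of $A$). If $p=bqa$, $q$ is a divisor; $q\le p$ denotes an occurrence with $\mathrm{pre}_p(q)=a$, $\mathrm{suf}_p(q)=b$; suffix/prefix mean $b$/$a$ trivial; proper means $q\ne p$. For $n\ge -1$, a left $n$-ambiguity is a path $p=u_{-1}u_0\cdots u_n$ with $u_{-1}\in Q_0$, $u_0\in Q_1$, $u_i\in\mathcal B$, and for $0\le i\le n-1$, $u_iu_{i+1}\in I$ while no proper suffix of $u_iu_{i+1}$ lies in $I$; a right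 $n$-ambiguity is $p=v_n\cdots v_0v_{-1}$ with $v_{-1}\in Q_0$, $v_0\in Q_1$, $v_i\in\mathcal B$, $v_{i+1}v_i\in I$ and no proper prefix of $v_{i+1}v_i$ in $I$. These notions coincide; $\Gamma_n$ is the set of $n$-ambiguities; decompositions are unique; $\sigma_m(p):=u_0\cdots u_m$, $\pi_m(p):=v_m\cdots v_0$; $\mathrm{Sub}(p)=\{q\in\Gamma_{n-1}:q\le p\}$. Bardzell's resolution: $\mathbb B(A)_{n+1}=A\otimes_E\Bbbk\Gamma_n\otimes_EA$, with $d(1\otimes p\otimes1)=\sum_{q\in\mathrm{Sub}(p)}\mathrm{suf}_p(q)\otimes q\otimes\mathrm{pre}_p(q)$ for $p\in\Gamma_n$, $n$ odd, and $d(1\otimes p\otimes1)=\mathrm{suf}_p(\pi_{n-1}(p))\otimes\pi_{n-1}(p)\otimes1-1\otimes\sigma_{n-1}(p)\otimes\mathrm{pre}_p(\sigma_{n-1}(p))$ for $n$ even. Let $\Bbbk(\Gamma_n\|\mathcal B):=\mathrm{Hom}_{E^e}(\Bbbk\Gamma_n,A)\cong\mathrm{Hom}_{A^e}(\mathbb B(A)_{n+1},A)$; it has basis the maps $(p\|b)$ for $p\in\Gamma_n$, $b\in\mathcal B$ parallel to $p$ (same source and target), where $(p\|b)(q)=b$ if $q=p$ and $0$ for other $q\in\Gamma_n$. The differential $\partial^{n+1}:\Bbbk(\Gamma_{n}\|\mathcal B)\to\Bbbk(\Gamma_{n+1}\|\mathcal B)$ is $(\partial f)(q)=\hat f(d(1\otimes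 q\otimes 1))$, where $\hat f(c\otimes p\otimes a)=c\,f(p)\,a$ (product in $A$). A cocycle is $x$ with $\partial x=0$. A cocycle $x=\sum_{i=1}^k\alpha_i(p_i\|b_i)$ with all $\alpha_i\ne0$ and the $(p_i\|b_i)$ pairwise distinct is irreducible if for every proper nonempty subsequence $1\le i_1<\dots<i_\ell\le k$ ($\ell<k$) and all nonzero $\beta_1,\dots,\beta_\ell\in\Bbbk$, $\partial\big(\sum_{j=1}^\ell\beta_j(p_{i_j}\|b_{i_j})\big)\neq 0$. *)

(* Defs.v *)
From HB Require Import structures.
From mathcomp Require Import all_boot all_algebra.
Import GRing.Theory.
Set Implicit Arguments. Unset Strict Implicit. Unset Printing Implicit Defensive.

Record quiver := Quiver {
  Q0 : finType;
  Q1 : finType;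
  qs : Q1 -> Q0;
  qt : Q1 -> Q0 }.

Section BardzellCochains.
Variable Q : quiver.

(* A path is a pair (v, w) where w is the WRITTEN word of arrows,
   p = alpha_n ... alpha_1 stored as [:: alpha_n; ...; alpha_1]
   (right-to-left convention), and v is its source vertex
   (for a trivial path e_v, w = [::]). *)
Definition qpath : Type := (Q0 Q * seq (Q1 Q))%type.

Definition pword (p : qpath) : seq (Q1 Q) := p.2.
Definition psrc (p : qpath) : Q0 Q := p.1.
Definition ptgt (p : qpath) : Q0 Q := if p.2 is x :: _ then qt x else p.1.

(* consecutive written letters x y (i.e. ... x y ...) satisfy t(y) = s(x) *)
Definition adj (x y : Q1 Q) : bool := qs x == qt y.

Definition valid_path (p : qpath) : bool :=
  sorted adj p.2 && (if p.2 is x :: w then p.1 == qs (last x w) else true).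

Definition nontrivial (p : qpath) : bool := p.2 != [::].

(* concatenation q p (first p, then q), meaningful when ptgt p = psrc q *)
Definition qcomp (q p : qpath) : qpath := (p.1, q.2 ++ p.2).

(* the vertex at position i (0 = leftmost = target, size = source) *)
Definition vertex_at (p : qpath) (i : nat) : Q0 Q :=
  if i is i'.+1 then (if drop i' p.2 is x :: _ then qs x else p.1) else ptgt p.

Definition subpath (p : qpath) (i j : nat) : qpath :=
  (vertex_at p j, drop i (take j p.2)).

(* The monomial ideal I generated by the set of paths R: a path lies in I
   iff one of the generators is a divisor of it. *)
Variable R : seq (seq (Q1 Q)).

Definition inI (p : qpath) : bool := has (fun r => infix r p.2) R.

Definition inB (p : qpath) : bool := valid_path p && ~~ inI p.

Definition monomial_rels : Prop :=
  forall r, r \in R -> sorted adj r /\ (2 <= size r)%N.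

Definition triangular : Prop :=
  forall p, valid_path p -> nontrivial p -> psrc p != ptgt p.

Definition fin_dim : Prop :=
  exists N, forall p, valid_path p -> (N <= size p.2)%N -> inI p.

(* left n-ambiguity: p = u_{-1} u_0 ... u_n, us = [:: u_0; ...; u_n]
   (u_{-1} = ptgt p is implicit).  A proper suffix (divisor with trivial
   left cofactor) of w is subpath w 0 k with k < |w|. *)
Definition left_amb (n : nat) (p : qpath) (us : seq qpath) : Prop :=
  valid_path p /\ size us = n.+1 /\
      flatten (map pword us) = p.2 /\
      size (nth p us 0).2 = 1%N /\
      (forall i, (i <= n)%N -> inB (nth p us i)) /\
      (forall i, (i < n)%N ->
         ptgt (nth p us i.+1) = psrc (nth p us i) /\
         let w := qcomp (nth p us i) (nth p us i.+1) in
         inI w /\ forall k, (k < size w.2)%N -> ~~ inI (subpath w 0 k)).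

(* right n-ambiguity: p = v_n ... v_0 v_{-1}, vs = [:: v_n; ...; v_0]
   (v_{-1} = psrc p implicit).  A proper prefix (divisor with trivial
   right cofactor) of w is subpath w k |w| with 0 < k. *)
Definition right_amb (n : nat) (p : qpath) (vs : seq qpath) : Prop :=
  valid_path p /\ size vs = n.+1 /\
      flatten (map pword vs) = p.2 /\
      size (nth p vs n).2 = 1%N /\
      (forall i, (i <= n)%N -> inB (nth p vs i)) /\
      (forall i, (i < n)%N ->
         ptgt (nth p vs i.+1) = psrc (nth p vs i) /\
         let w := qcomp (nth p vs i) (nth p vs i.+1) in
         inI w /\ forall k, (0 < k)%N -> ~~ inI (subpath w k (size w.2))).

Definition Gamma (n : nat) (p : qpath) : Prop := exists us, left_amb n p us.

(* lengths of sigma_m(p) = u_0 ... u_m and pi_m(p) = v_m ... v_0 *)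
Definition lsig (m : nat) (us : seq qpath) : nat :=
  size (flatten (map pword (take m.+1 us))).
Definition lpi (m : nat) (vs : seq qpath) : nat :=
  size (flatten (map pword (drop (size vs - m.+1) vs))).

Variable K : fieldType.
Local Open Scope ring_scope.

(* Elements of A are represented by their coefficient functions on paths;
   the image in A of a path w is w if w is not in I, and 0 otherwise. *)
Definition pathelt (w : qpath) : qpath -> K :=
  fun z => if ~~ inI w && (z == w) then 1 else 0.

(* A cochain x = sum_i alpha_i (p_i || b_i) is given by the list of the
   triples (alpha_i, (p_i, b_i)). *)
Definition cochain := seq (K * (qpath * qpath)).

(* hat f (c (x) r (x) a) = c f(r) a *)
Definition hatf (x : cochain) (c r a : qpath) : qpath -> K :=
  fun z => \sum_(e <- x | e.2.1 == r) e.1 * pathelt (qcomp (qcomp c e.2.2) a) z.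

(* (partial x)(q) for q in Gamma_m, m odd: sum over the occurrences of
   divisors of q (only occurrences of some p_i contribute). *)
Definition Dodd (x : cochain) (q : qpath) : qpath -> K :=
  fun z => let L := size q.2 in
  \sum_(i < L.+1) \sum_(j < L.+1 | (i <= j)%N)
     hatf x (subpath q 0 i) (subpath q i j) (subpath q j L) z.

(* (partial x)(q) for q in Gamma_m, m even, given |sigma_{m-1}(q)| = ls and
   |pi_{m-1}(q)| = lp *)
Definition Deven (x : cochain) (q : qpath) (ls lp : nat) : qpath -> K :=
  fun z => let L := size q.2 in
  hatf x (subpath q 0 (L - lp)) (subpath q (L - lp) L) (subpath q L L) z
  - hatf x (subpath q 0 0) (subpath q 0 ls) (subpath q ls L) z.

Definition cocycle (n : nat) (x : cochain) : Prop :=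
  forall q, Gamma n.+1 q ->
    if odd n.+1 then forall z, Dodd x q z = 0
    else forall us vs, left_amb n.+1 q us -> right_amb n.+1 q vs ->
      forall z, Deven x q (lsig n us) (lpi n vs) z = 0.

Definition wf_cochain (n : nat) (x : cochain) : Prop :=
  uniq (map snd x) /\
  forall e, e \in x ->
    [/\ e.1 != 0, Gamma n e.2.1, inB e.2.2,
        psrc e.2.2 = psrc e.2.1 & ptgt e.2.2 = ptgt e.2.1].

Definition irreducible (n : nat) (x : cochain) : Prop :=
  cocycle n x /\
  forall (m : bitseq), size m = size x ->
    (0 < count id m < size x)%N ->
    forall bs : seq K, size bs = count id m -> all (fun b => b != 0) bs ->
      ~ cocycle n (zip bs (map snd (mask m x))).

End BardzellCochains.

(* Main.v *)
Require Import Defs.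
From HB Require Import structures.
From mathcomp Require Import all_boot all_algebra.
From Stdlib Require Import ClassicalEpsilon Classical.
From mathcomp Require Import zify.
Set Implicit Arguments. Unset Strict Implicit. Unset Printing Implicit Defensive.
Import GRing.Theory.

Lemma catLK (T : Type) (s s1 s2 : seq T) : s ++ s1 = s ++ s2 -> s1 = s2.
Proof. by elim: s => //= x s IH [] /IH. Qed.

Lemma catRK (T : Type) (s s1 s2 : seq T) : s1 ++ s = s2 ++ s -> s1 = s2.
Proof.
move=> /(congr1 rev); rewrite !rev_cat => /catLK /(congr1 rev).
by rewrite !revK.
Qed.

Lemma cat_eq_cases (T : Type) (l1 r1 l2 r2 : seq T) : l1 ++ r1 = l2 ++ r2 ->
  (exists t, l2 = l1 ++ t /\ r1 = t ++ r2) \/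
  (exists t, l1 = l2 ++ t /\ r2 = t ++ r1).
Proof.
elim: l1 l2 => [|x l1 IH] [|y l2] /=.
- by move=> ->; left; exists [::].
- by move=> ->; left; exists (y :: l2).
- by move=> <-; right; exists (x :: l1).
- case=> <- /IH [[t [-> ->]]|[t [-> ->]]]; [left|right]; by exists t.
Qed.

Section Words.
Variable Q : quiver.
Hypothesis tri : triangular Q.

Definition lastv (l : seq (Q1 Q)) (d : Q0 Q) :=
  if l is y :: l' then qs (last y l') else d.
Definition headv (r : seq (Q1 Q)) (d : Q0 Q) :=
  if r is y :: _ then qt y else d.

Lemma lastv_cat (l m : seq (Q1 Q)) d d' : m != [::] -> lastv (l ++ m) d = lastv m d'.
Proof.
case: m => // y m _; case: l => //= z l.
by rewrite last_cat.
Qed.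

Lemma vtxL (p : qpath Q) l r : p.2 = l ++ r ->
  vertex_at p (size l) = lastv l (ptgt p).
Proof.
case: l => [|y l] E //.
rewrite /vertex_at /= E lastI cat_rcons -(size_belast y l) drop_size_cat //.

Qed.

Lemma vtxR (p : qpath Q) l r : valid_path p -> p.2 = l ++ r ->
  vertex_at p (size l) = headv r p.1.
Proof.
move=> /andP[S V] E.
rewrite (vtxL E).
case: l E => [|y l] E /=; first by rewrite /ptgt E.
case: r E => [|z r] E /=.
  by move: V; rewrite E cats0 => /eqP ->.
move: S; rewrite E /= cat_path /= => /and3P[_ H _].
by apply/eqP.
Qed.

Lemma vtx_neq (p : qpath Q) l m r : valid_path p -> p.2 = l ++ m ++ r ->
  m != [::] -> vertex_at p (size l) != vertex_at p (size l + size m).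
Proof.
move=> Vp E; case: m E => // y m E _.
have S : sorted (@adj Q) (y :: m).
  by move: Vp => /andP[S _]; apply: infix_sorted S; rewrite E infix_infix.
have := tri (p := (qs (last y m), y :: m)).
rewrite /valid_path /nontrivial /=. move: S => /= -> ; rewrite eqxx => /(_ isT isT).
rewrite /psrc /ptgt /=.
have -> : (size l + (size m).+1 = size (l ++ y :: m))%N by rewrite size_cat.
rewrite (vtxR Vp E) /= (vtxL (l := l ++ y :: m) (r := r)); last by rewrite E catA.
by rewrite (@lastv_cat l (y :: m) (ptgt p) (ptgt p)) //= eq_sym.
Qed.

Definition par (P B : qpath Q) :=
  [/\ valid_path P, valid_path B, P.1 = B.1 & ptgt P = ptgt B].

Lemma par_sym P B : par P B -> par B P.
Proof. by case=> *; split. Qed.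

Lemma vtx_pre P B c X Y : par P B -> P.2 = c ++ X -> B.2 = c ++ Y ->
  vertex_at P (size c) = vertex_at B (size c).
Proof. by case=> _ _ _ Et EP EB; rewrite (vtxL EP) (vtxL EB) Et. Qed.

Lemma vtx_suf P B a X Y : par P B -> P.2 = X ++ a -> B.2 = Y ++ a ->
  vertex_at P (size X) = vertex_at B (size Y).
Proof. by case=> VP VB E1 _ EP EB; rewrite (vtxR VP EP) (vtxR VB EB) E1. Qed.

Lemma NE P B c M H a : par P B -> P.2 = c ++ M ++ a -> B.2 = c ++ H ++ a ->
  M != [::] -> H != [::].
Proof.
move=> PB EP EB nM; apply/negP => /eqP HE; subst H.
have [VP _ _ _] := PB.
have := vtx_neq VP EP nM.
rewrite (vtx_pre PB EP EB).
have -> : (size c + size M = size (c ++ M))%N by rewrite size_cat.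
rewrite (vtx_suf (a := a) (X := c ++ M) (Y := c) PB) ?eqxx //.
  by rewrite EP catA.
Qed.

Lemma DIS P B c1 M1 H1 s M2 H2 a2 : par P B -> P.2 != B.2 ->
  P.2 = c1 ++ M1 ++ s ++ M2 ++ a2 ->
  B.2 = c1 ++ H1 ++ s ++ M2 ++ a2 ->
  B.2 = c1 ++ M1 ++ s ++ H2 ++ a2 -> False.
Proof.
move=> PB neq EP EB1 EB2.
have [VP VB _ _] := PB.
have E : H1 ++ (s ++ M2 ++ a2) = M1 ++ (s ++ H2 ++ a2).
  by apply: (@catLK _ c1); rewrite -EB1 -EB2.
have fin : M1 = H1 -> False.
  move=> EM; subst M1; move: E => /catLK /catLK /catRK EM; subst H2.
  by move: neq; rewrite EP EB1 eqxx.
case: (cat_eq_cases E) => [[t [EM Et]]|[t [EH Et]]].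
-
  apply: fin; rewrite EM.
  suff : t = [::] by move->; rewrite cats0.
  apply/eqP; apply: contraT => nt.
  have EP' : P.2 = (c1 ++ H1) ++ t ++ (s ++ M2 ++ a2) by rewrite EP EM !catA.
  have := vtx_neq VP EP' nt.
  rewrite (vtx_pre (X := t ++ (s ++ M2 ++ a2)) (Y := s ++ M2 ++ a2) PB EP') ?catA //;
    last by rewrite EB1 !catA.
  have -> : (size (c1 ++ H1) + size t = size (c1 ++ M1))%N by rewrite EM !size_cat addnA.
  rewrite (vtx_suf (a := s ++ M2 ++ a2) (X := c1 ++ M1) (Y := c1 ++ H1) PB) ?eqxx //.
    by rewrite EP !catA.
  by rewrite EB1 !catA.
-
  apply: fin; rewrite EH.
  suff : t = [::] by move->; rewrite cats0.
  apply/eqP; apply: contraT => nt.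
  have EB' : B.2 = (c1 ++ M1) ++ t ++ (s ++ M2 ++ a2) by rewrite EB1 EH !catA.
  have := vtx_neq VB EB' nt.
  have EP2 : P.2 = (c1 ++ M1) ++ (s ++ M2 ++ a2) by rewrite EP -!catA.
  have EB3 : B.2 = (c1 ++ M1) ++ (s ++ H2 ++ a2) by rewrite EB2 -!catA.
  rewrite -(vtx_pre PB EP2 EB3).
  have -> : (size (c1 ++ M1) + size t = size (c1 ++ H1))%N by rewrite EH !size_cat addnA.
  rewrite (vtx_suf (a := s ++ M2 ++ a2) (X := c1 ++ M1) (Y := c1 ++ H1) PB EP2) ?eqxx //.
  by rewrite EB1 !catA.
Qed.


Lemma CORE_half P B c1 M1 H1 a1 d M2 H2 a2 : par P B -> P.2 != B.2 ->
  P.2 = c1 ++ M1 ++ a1 -> B.2 = c1 ++ H1 ++ a1 ->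
  P.2 = (c1 ++ d) ++ M2 ++ a2 -> B.2 = (c1 ++ d) ++ H2 ++ a2 -> M2 != [::] ->
  exists M H x1 y1 x2 y2, M != [::] /\ H != [::] /\ M1 = x1 ++ M ++ y1 /\
     H1 = x1 ++ H ++ y1 /\ M2 = x2 ++ M ++ y2 /\ H2 = x2 ++ H ++ y2.
Proof.
move=> PB neq EP1 EB1 EP2 EB2 nM2.
have EM : M1 ++ a1 = (d ++ M2) ++ a2.
  by apply: (@catLK _ c1); rewrite -EP1 EP2 -!catA.
have EH : H1 ++ a1 = d ++ H2 ++ a2.
  by apply: (@catLK _ c1); rewrite -EB1 EB2 -!catA.
case: (cat_eq_cases EM) => [[t [Et Ea]]|[t [Et Ea]]]; last first.
- exists M2, H2, d, t, [::], [::]; do ! split => //.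
  + by apply: (NE PB EP2 EB2).
  + by rewrite Et -catA.
  + by apply: (@catRK _ a1); rewrite EH Ea -!catA.
  + by rewrite cats0.
  + by rewrite cats0.
case: (cat_eq_cases Et) => [[u [Ed Eu]]|[u [Ed Eu]]]; last first.
- exfalso; apply: (DIS (c1 := c1) (M1 := M1) (H1 := H1) (s := u) (M2 := M2) (H2 := H2) (a2 := a2) PB neq).
  + by rewrite EP1 Ea Eu -!catA.
  + by rewrite EB1 Ea Eu -!catA.
  + by rewrite EB2 Ed -!catA.
have EH' : H1 ++ t = d ++ H2.
  by apply: (@catRK _ a2); rewrite -!catA -Ea EH.
case: (cat_eq_cases EH') => [[v [Ed' Ev]]|[h [Eh Eh2]]].
- exfalso; apply: (DIS (c1 := c1) (M1 := H1) (H1 := M1) (s := v) (M2 := H2) (H2 := M2) (a2 := a2) (par_sym PB)).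
  + by rewrite eq_sym.
  + by rewrite EB1 Ea Ev -!catA.
  + by rewrite EP1 Ea Ev -!catA.
  + by rewrite EP2 Ed' -!catA.
- have EPu : P.2 = (c1 ++ d) ++ u ++ (t ++ a2) by rewrite EP1 Ea Ed -!catA.
  have EBh : B.2 = (c1 ++ d) ++ h ++ (t ++ a2) by rewrite EB1 Ea Eh -!catA.
  have [nu|/negPn/eqP u0] := boolP (u != [::]).
    exists u, h, d, [::], [::], t; do ! split => //.
    + by apply: (NE PB EPu EBh).
    + by rewrite cats0.
    + by rewrite cats0.
  exfalso; subst u.
  have [nh|/negPn/eqP h0] := boolP (h != [::]).
    by have := NE (par_sym PB) EBh EPu nh.
  subst h; move: neq; rewrite EPu EBh eqxx //.
Qed.

Lemma CORE P B c1 M1 H1 a1 c2 M2 H2 a2 : par P B -> P.2 != B.2 ->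
  P.2 = c1 ++ M1 ++ a1 -> B.2 = c1 ++ H1 ++ a1 ->
  P.2 = c2 ++ M2 ++ a2 -> B.2 = c2 ++ H2 ++ a2 -> M1 != [::] -> M2 != [::] ->
  exists M H x1 y1 x2 y2, M != [::] /\ H != [::] /\ M1 = x1 ++ M ++ y1 /\
     H1 = x1 ++ H ++ y1 /\ M2 = x2 ++ M ++ y2 /\ H2 = x2 ++ H ++ y2.
Proof.
move=> PB neq EP1 EB1 EP2 EB2 nM1 nM2.
have E : c1 ++ (M1 ++ a1) = c2 ++ (M2 ++ a2) by rewrite -EP1 -EP2.
case: (cat_eq_cases E) => [[t [Ec _]]|[t [Ec _]]].
- by subst c2; apply: (CORE_half PB neq EP1 EB1 EP2 EB2 nM2).
- subst c1.
  have [M [H [x1 [y1 [x2 [y2 [? [? [? [? [? ?]]]]]]]]]]] := CORE_half PB neq EP2 EB2 EP1 EB1 nM1.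
  by exists M, H, x2, y2, x1, y1.
Qed.

End Words.


Definition asb (P : Prop) : bool := if excluded_middle_informative P then true else false.
Lemma asbP (P : Prop) : reflect P (asb P).
Proof. by rewrite /asb; case: excluded_middle_informative => h; constructor. Qed.

Section Link.
Variable Q : quiver.
Variable R : seq (seq (Q1 Q)).
Variable K : fieldType.
Local Open Scope ring_scope.

Lemma inI_infix (w p : qpath Q) : infix w.2 p.2 -> inI R w -> inI R p.
Proof.
move=> I /hasP[r rR Ir]; apply/hasP; exists r => //.
exact: infix_trans Ir I.
Qed.

Lemma G_valid n p us : left_amb R n p us -> valid_path p.
Proof. by case. Qed.

Lemma G_ne n p us : left_amb R n p us -> p.2 != [::].
Proof.
case=> _ [Hs [Hf [H0 _]]].
case: us Hs Hf H0 => // u us _ <- /=; rewrite /pword.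
by case: u.2.
Qed.

Lemma G_inI n q us : left_amb R n.+1 q us -> inI R q.
Proof.
case=> _ [Hs [Hf [_ [_ Hi]]]].
have [_ [Hw _]] := Hi 0%N (ltn0Sn n).
apply: inI_infix Hw.
case: us Hs Hf {Hi} => [|u0 [|u1 us]] //= _ <-.
by rewrite /pword catA; apply: prefix_infix.
Qed.

Lemma lsig_le m k q us : left_amb R m q us -> (lsig k us <= size q.2)%N.
Proof.
case=> _ [_ [Hf _]]; rewrite /lsig -Hf.
rewrite -{2}(cat_take_drop k.+1 us) map_cat flatten_cat size_cat.
exact: leq_addr.
Qed.


Definition kodd (pb : qpath Q * qpath Q) (q z : qpath Q) : K :=
  let L := size q.2 in
  \sum_(i < L.+1) \sum_(j < L.+1 | (i <= j)%N)
    (if pb.1 == subpath q i j then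
       pathelt R K (qcomp (qcomp (subpath q 0 i) pb.2) (subpath q j L)) z else 0).

Lemma Dodd_lin (x : cochain Q K) q z :
  Dodd R x q z = \sum_(e <- x) e.1 * kodd e.2 q z.
Proof.
rewrite /Dodd /kodd /hatf.
under [RHS]eq_bigr => e _ do rewrite mulr_sumr.
rewrite exchange_big /=; apply: eq_bigr => i _.
under [RHS]eq_bigr => e _ do rewrite mulr_sumr.
rewrite exchange_big /=; apply: eq_bigr => j _.
rewrite big_mkcond /=; apply: eq_bigr => e _.
by case: ifP; rewrite ?mulr0.
Qed.

Definition keven (pb : qpath Q * qpath Q) (q : qpath Q) (ls lp : nat) (z : qpath Q) : K :=
  let L := size q.2 in
  (if pb.1 == subpath q (L - lp) L then
     pathelt R K (qcomp (qcomp (subpath q 0 (L - lp)) pb.2) (subpath q L L)) z else 0)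
  - (if pb.1 == subpath q 0 ls then
     pathelt R K (qcomp (qcomp (subpath q 0 0) pb.2) (subpath q ls L)) z else 0).

Lemma Deven_lin (x : cochain Q K) q ls lp z :
  Deven R x q ls lp z = \sum_(e <- x) e.1 * keven e.2 q ls lp z.
Proof.
rewrite /Deven /keven /hatf.
under [RHS]eq_bigr => e _ do rewrite mulrBr.
rewrite sumrB; congr (_ - _); rewrite big_mkcond /=; apply: eq_bigr => e _;
by case: ifP; rewrite ?mulr0.
Qed.


Definition ctx := (qpath Q * seq (qpath Q) * seq (qpath Q) * qpath Q)%type.
Definition okc n (c : ctx) : Prop :=
  Gamma R n.+1 c.1.1.1 /\
  (odd n.+1 = false -> left_amb R n.+1 c.1.1.1 c.1.1.2 /\ right_amb R n.+1 c.1.1.1 c.1.2).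
Definition kap n (pb : qpath Q * qpath Q) (c : ctx) : K :=
  if odd n.+1 then kodd pb c.1.1.1 c.2
  else keven pb c.1.1.1 (lsig n c.1.1.2) (lpi n c.1.2) c.2.

Lemma cocycleE n (y : cochain Q K) :
  cocycle R n y <-> forall c, okc n c -> \sum_(e <- y) e.1 * kap n e.2 c = 0.
Proof.
split.
- move=> H [[[q us] vs] z] [G Hev]; have := H q G; rewrite /kap.
  case E: (odd n.+1) Hev => Hev.
  + by move=> /(_ z); rewrite Dodd_lin.
  + have [L Rr] := Hev (erefl false).
    by move=> /(_ us vs L Rr z); rewrite Deven_lin.
- move=> H q G; rewrite /cocycle.
  case E: (odd n.+1).
  + move=> z; rewrite Dodd_lin; have := H (q, [::], [::], z).
    rewrite /kap E; apply; split => //; by rewrite E.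
  + move=> us vs L Rr z; rewrite Deven_lin; have := H (q, us, vs, z).
    by rewrite /kap E; apply; split.
Qed.

Lemma component (n : nat) (y : cochain Q K) (p : pred (K * (qpath Q * qpath Q))) :
  cocycle R n y ->
  (forall c, okc n c -> forall e f, e \in y -> f \in y -> p e ->
     kap n e.2 c != 0 -> kap n f.2 c != 0 -> p f) ->
  cocycle R n (filter p y).
Proof.
move=> /cocycleE Hy Hcl; apply/cocycleE => c oc.
rewrite big_filter.
have [/hasP [e ey /andP [pe ke]]|/hasPn H0] :=
  boolP (has (fun e => p e && (kap n e.2 c != 0)) y).
- rewrite -[RHS](Hy c oc) big_mkcond /=; apply: eq_big_seq => f fy.
  case: ifP => // pf; apply/esym.
  have [kf|/negPn/eqP ->] := boolP (kap n f.2 c != 0); last by rewrite mulr0.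
  by rewrite (Hcl c oc e f ey fy pe ke kf) in pf.
- rewrite big1_seq // => f /andP [pf fy].
  by have := H0 f fy; rewrite pf /= => /negPn/eqP ->; rewrite mulr0.
Qed.

Lemma irr_closed n (x : cochain Q K) (p : pred (K * (qpath Q * qpath Q))) :
  wf_cochain R n x -> irreducible R n x ->
  (forall c, okc n c -> forall e f, e \in x -> f \in x -> p e ->
     kap n e.2 c != 0 -> kap n f.2 c != 0 -> p f) ->
  (0 < count p x)%N -> count p x = size x.
Proof.
move=> [_ Hwf] [Hc Hirr] Hcl c0.
apply/eqP; rewrite eqn_leq count_size /=; apply: contraT; rewrite -ltnNge => clt.
have cm : count id [seq p i | i <- x] = count p x.
  by rewrite count_map; apply: eq_count.
exfalso; apply: (Hirr [seq p i | i <- x] (size_map _ _) _ (map fst (filter p x))).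
- by rewrite cm c0 clt.
- by rewrite size_map size_filter cm.
- apply/allP => b /mapP [e]; rewrite mem_filter => /andP [_ ex] ->.
  by have [] := Hwf e ex.
rewrite -filter_mask.
have -> : zip [seq i.1 | i <- [seq x0 <- x | p x0]] [seq i.2 | i <- [seq x0 <- x | p x0]]
  = [seq x0 <- x | p x0] by apply: zip_unzip.
exact: component.
Qed.


Lemma sum_ne (I : eqType) (r : seq I) (P : pred I) (F : I -> K) :
  \sum_(i <- r | P i) F i != 0 -> exists i, [/\ i \in r, P i & F i != 0].
Proof.
move=> H; have [/hasP [i ir /andP [Pi Fi]]|/hasPn H0] := boolP (has (fun i => P i && (F i != 0)) r).
  by exists i.
move: H; rewrite big_seq_cond big1 ?eqxx // => i /andP [ir Pi].
by have := H0 i ir; rewrite Pi /= => /negPn/eqP.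
Qed.

Lemma term_ne (b : bool) w z : (if b then pathelt R K w z else 0) != 0 ->
  [/\ b, z = w & ~~ inI R w].
Proof.
case: b; last by rewrite eqxx.
rewrite /pathelt; case: ifP; last by rewrite eqxx.
by move=> /andP [nI /eqP ->].
Qed.

Lemma kap_ne n pb c : okc n c -> kap n pb c != 0 ->
  exists i j, [/\ (i <= j <= size c.1.1.1.2)%N, pb.1 = subpath c.1.1.1 i j,
    c.2 = qcomp (qcomp (subpath c.1.1.1 0 i) pb.2) (subpath c.1.1.1 j (size c.1.1.1.2))
    & ~~ inI R c.2].
Proof.
move: c => [[[q us] vs] z] [G Hev]; rewrite /kap.
case E: (odd n.+1) Hev => Hev.
- rewrite /kodd => /sum_ne [i [_ _ /sum_ne [j [_ ij /term_ne [/eqP e1 ez nI]]]]].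
  exists i, j; split => //; last by rewrite ez.
  by rewrite ij /= -ltnS ltn_ord.
- have [L Rr] := Hev (erefl false).
  rewrite /keven.
  set t1 := (if _ then _ else _); set t2 := (if _ then _ else _).
  have [n1|/negPn/eqP e1] := boolP (t1 != 0).
    move: n1 => /term_ne [/eqP e1 ez nI].
    exists (size q.2 - lpi n vs)%N, (size q.2); split => //; last by rewrite ez.
    by rewrite leq_subr leqnn.
  rewrite e1 sub0r oppr_eq0 => /term_ne [/eqP e2 ez nI].
  exists 0%N, (lsig n us); split => //; last by rewrite ez.
  by rewrite leq0n (lsig_le _ L).
Qed.

End Link.


Section Contact.
Variable Q : quiver.
Variable R : seq (seq (Q1 Q)).
Variable K : fieldType.
Hypothesis tri : triangular Q.

Lemma ptgtE (p : qpath Q) : ptgt p = headv p.2 p.1.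
Proof. by case: p => v []. Qed.

Lemma headv_cat (m r : seq (Q1 Q)) d d' : m != [::] -> headv (m ++ r) d = headv m d'.
Proof. by case: m. Qed.

Lemma lastv_cc (l r : seq (Q1 Q)) w d : lastv (l ++ w :: r) d = qs (last w r).
Proof. by case: l => //= a l; rewrite last_cat. Qed.

Lemma lastv_cc2 (l m r : seq (Q1 Q)) w d : lastv (l ++ m ++ w :: r) d = qs (last w r).
Proof. by rewrite catA lastv_cc. Qed.

Lemma sorted_join (l r bw : seq (Q1 Q)) y :
  sorted (@adj Q) l -> sorted (@adj Q) (y :: bw) -> sorted (@adj Q) r ->
  lastv l (qt y) = qt y -> headv r (qs (last y bw)) = qs (last y bw) ->
  sorted (@adj Q) (l ++ (y :: bw) ++ r).
Proof.
move=> Sl Sb Sr Hl Hr.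
have Sbr : sorted (@adj Q) (y :: bw ++ r).
  rewrite /= cat_path; apply/andP; split => //.
  case: r Sr Hr => //= z r Sr Hr; rewrite Sr andbT; exact/eqP.
case: l Sl Hl => //= x l Sl Hl.
rewrite cat_path Sl /=; apply/andP; split; first exact/eqP.
exact: Sbr.
Qed.

Lemma subwords (q : qpath Q) i j : (i <= j <= size q.2)%N ->
  q.2 = take i q.2 ++ (subpath q i j).2 ++ drop j q.2.
Proof.
move=> /andP [ij jL]; rewrite /subpath /=.
by rewrite catA -{1}(take_takel _ ij) cat_take_drop cat_take_drop.
Qed.

Lemma contact n (c : ctx Q) (pb : qpath Q * qpath Q) :
  okc R n c -> kap R K n pb c != 0%R -> (exists us, left_amb R n pb.1 us) ->
  valid_path pb.2 -> pb.2.1 = pb.1.1 -> ptgt pb.2 = ptgt pb.1 ->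
  [/\ par c.1.1.1 c.2, c.1.1.1.2 != c.2.2 &
     exists ce ae, c.1.1.1.2 = ce ++ pb.1.2 ++ ae /\ c.2.2 = ce ++ pb.2.2 ++ ae].
Proof.
move=> oc kne [us Lp] Vb Eb1 Ebt.
move: oc kne; case: c => [[[q us'] vs'] z] oc kne.
have [i [j [ijL E1 Ez nIz]]] := kap_ne oc kne.
have [[vs Lq] _] := oc.
rewrite /= in ijL E1 Ez nIz Lq *.
have Vq := G_valid Lq.
have Iq := G_inI Lq.
have nm := G_ne Lp.
move: (ijL) => /andP [ij jL].
set l := take i q.2; set r := drop j q.2; set m := (subpath q i j).2.
have Eq : q.2 = l ++ m ++ r by apply: subwords.
have sl : size l = i by rewrite size_takel // (leq_trans ij jL).
have sm : (size l + size m)%N = j.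
  rewrite sl /m /subpath /= size_drop size_takel //.
  by rewrite subnKC.
have Ez2 : z.2 = l ++ pb.2.2 ++ r.
  by rewrite Ez /= drop0 take_size catA.
have Ez1 : z.1 = q.1.
  rewrite Ez /= /subpath /=.
  by rewrite (vtxR Vq (l := q.2) (r := [::])) // cats0.
have E1m : pb.1.2 = m by rewrite E1.
have nm' : m != [::] by rewrite -E1m.
have E11 : pb.1.1 = vertex_at q j by rewrite E1.
have Vi : vertex_at q i = ptgt pb.1.
  rewrite -sl (vtxR Vq Eq) ptgtE E1m.
  by move: nm; rewrite E1m; case: (m).
have Vj : vertex_at q j = pb.1.1 by rewrite E11.
have nb : pb.2.2 != [::].
  apply/negP => /eqP b0.
  have := vtx_neq tri Vq Eq nm'.
  rewrite sm sl Vi Vj -Ebt ptgtE b0 /= Eb1 eqxx //.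
have Vz : valid_path z.
  move: nb Ez2; case Eb: (pb.2.2) => [//|y bw] _ Ez2.
  have Sq : sorted (@adj Q) q.2 by case/andP: Vq.
  have Sb : sorted (@adj Q) (y :: bw) by move: Vb => /andP []; rewrite Eb.
  have Vbs : pb.2.1 = qs (last y bw) by move: Vb => /andP [_]; rewrite Eb => /eqP.
  apply/andP; split.
    rewrite Ez2; apply: sorted_join => //.
    + by apply: infix_sorted Sq; rewrite Eq prefix_infix.
    + by apply: infix_sorted Sq; rewrite Eq catA suffix_infix.
    + move: (vtxL Eq); rewrite sl Vi -Ebt ptgtE Eb /=.
      by case: (l) => //= a l' ->.
    + move: (vtxR Vq (l := l ++ m) (r := r)); rewrite -catA size_cat sm => /(_ Eq).
      rewrite Vj -Eb1 Vbs.
      by case: (r).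
  have HV : forall (v : Q0 Q) w, (match w with [::] => true | x :: w' => v == qs (last x w') end) = (v == lastv w v).
    by move=> v [|x w] //=; rewrite eqxx.
  rewrite HV Ez2 Ez1.
  case Er: r => [|w r'].
    rewrite cats0 (@lastv_cat _ l (y :: bw) _ q.1) //=.
    move: (vtxR Vq (l := l ++ m) (r := r)).
    by rewrite -catA size_cat sm => /(_ Eq); rewrite Er /= Vj -Eb1 Vbs => ->.
  move: Vq => /andP [_]; rewrite HV Eq Er.
  by rewrite !lastv_cc2.
split.
- split => //.
  rewrite !ptgtE Ez1 Ez2 Eq.
  case: (l) => //=.
  rewrite (@headv_cat m r q.1 pb.1.1) // (@headv_cat pb.2.2 r q.1 pb.2.1) //.
  by rewrite -E1m -!ptgtE Ebt.
- apply/eqP => Ew; move: nIz; rewrite /inI -Ew.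
  by move: Iq; rewrite /inI => ->.
- by exists l, r; rewrite E1m.
Qed.

End Contact.


Lemma count_le_in (T : eqType) (a b : pred T) (s : seq T) :
  {in s, forall e, a e -> b e} -> (count a s <= count b s)%N.
Proof.
elim: s => //= y s IH H.
apply: leq_add; last by apply: IH => e es; apply: H; rewrite inE es orbT.
by case ay: (a y) => //=; rewrite H // mem_head.
Qed.

Lemma count_strict (T : eqType) (a b : pred T) (s : seq T) f :
  {in s, forall e, a e -> b e} -> f \in s -> b f -> ~~ a f ->
  (count a s < count b s)%N.
Proof.
elim: s => //= y s IH H; rewrite inE => /orP [/eqP <- | fs] bf naf.
- rewrite bf (negbTE naf) add0n add1n ltnS.
  by apply: count_le_in => e es; apply: H; rewrite inE es orbT.
- have H' : {in s, forall e, a e -> b e} by move=> e es; apply: H; rewrite inE es orbT.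
  have := IH H' fs bf naf.
  case ay: (a y); last by move=> lt; apply: leq_trans lt _; apply: leq_addl.
  by rewrite H ?mem_head.
Qed.

Section Main.
Variable Q : quiver.
Variable R : seq (seq (Q1 Q)).
Variable K : fieldType.
Hypothesis tri : triangular Q.

Definition hc (P H : seq (Q1 Q)) : pred (K * (qpath Q * qpath Q)) :=
  fun e => asb (exists cw aw, e.2.1.2 = cw ++ P ++ aw /\ e.2.2.2 = cw ++ H ++ aw).

Lemma hcP P H e : reflect (exists cw aw, e.2.1.2 = cw ++ P ++ aw /\ e.2.2.2 = cw ++ H ++ aw)
  (hc P H e).
Proof. exact: asbP. Qed.

Lemma wf_par n (x : cochain Q K) e : wf_cochain R n x -> e \in x ->
  [/\ par e.2.1 e.2.2, (exists us, left_amb R n e.2.1 us), valid_path e.2.2,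
      e.2.2.1 = e.2.1.1 & ptgt e.2.2 = ptgt e.2.1 /\ ~~ inI R e.2.2].
Proof.
move=> [_ Hwf] ex; have [_ [us L] /andP [Vb nI] Es Et] := Hwf e ex.
split => //; last by exists us.
split => //; first by apply: G_valid L.
Qed.

Lemma step n (x : cochain Q K) P H : wf_cochain R n x -> irreducible R n x ->
  P != [::] -> (0 < count (hc P H) x)%N -> (count (hc P H) x < size x)%N ->
  exists P' H', P' != [::] /\ (count (hc P H) x < count (hc P' H') x)%N.
Proof.
move=> wf irr nP c0 clt.
have Hncl : ~ (forall c, okc R n c -> forall e f, e \in x -> f \in x -> hc P H e ->
     kap R K n e.2 c != 0%R -> kap R K n f.2 c != 0%R -> hc P H f).
  move=> Hcl; have := irr_closed wf irr Hcl c0.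
  by move=> E; move: clt; rewrite E ltnn.
have [c [oc [e [f [ex fx pe ke [kf nf]]]]]] : exists c, okc R n c /\
    exists e f, [/\ e \in x, f \in x, hc P H e, kap R K n e.2 c != 0%R &
       kap R K n f.2 c != 0%R /\ ~~ hc P H f].
  apply: NNPP => N; apply: Hncl => c oc e f ex fx pe ke kf.
  apply: contraT => nf; exfalso; apply: N; exists c; split => //.
  by exists e, f; split.
have [PBe [use Le] Vbe Ebe1 [Ebet nIe]] := wf_par wf ex.
have [PBf [usf Lf] Vbf Ebf1 [Ebft nIf]] := wf_par wf fx.
have [Pqz nqz [ce [ae [Eqe Eze]]]] := contact tri oc ke (ex_intro _ use Le) Vbe Ebe1 Ebet.
have [_ _ [cf [af [Eqf Ezf]]]] := contact tri oc kf (ex_intro _ usf Lf) Vbf Ebf1 Ebft.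
have [M [H1 [x1 [y1 [x2 [y2 [nM [nH1 [EM1 [EH1 [EM2 EH2]]]]]]]]]]] :=
  CORE tri Pqz nqz Eqe Eze Eqf Ezf (G_ne Le) (G_ne Lf).
have [cw [aw [Ep Eb]]] := hcP P H e pe.
have npb : e.2.1.2 != e.2.2.2.
  by apply: contraNneq nqz => E; rewrite Eqe Eze E.
have [M' [H' [x3 [y3 [x4 [y4 [nM' [_ [EM3 [EH3 [EM4 EH4]]]]]]]]]]] :=
  CORE tri PBe npb Ep Eb EM1 EH1 nP nM.
exists M', H'; split => //.
apply: (count_strict (f := f)) => //.
- move=> g _ /hcP [cg [ag [Eg1 Eg2]]]; apply/hcP.
  exists (cg ++ x3), (y3 ++ ag).
  by rewrite Eg1 Eg2 EM3 EH3 -!catA.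
- apply/hcP; exists (x2 ++ x4), (y4 ++ y2).
  by rewrite EM2 EH2 EM4 EH4 -!catA.
Qed.

End Main.


Section Final.
Variable Q : quiver.
Variable R : seq (seq (Q1 Q)).

Lemma final_e (p b : qpath Q) cw aw h tP hb tH : par p b -> ~~ inI R b ->
  p.2 = cw ++ (h :: tP) ++ aw -> b.2 = cw ++ (hb :: tH) ++ aw ->
  exists a c : qpath Q,
    inB R a /\ inB R c /\
    ptgt a = psrc (qs (last h tP), h :: tP) /\ ptgt (qs (last h tP), h :: tP) = psrc c /\
    ptgt a = psrc (qs (last hb tH), hb :: tH) /\ ptgt (qs (last hb tH), hb :: tH) = psrc c /\
    p = qcomp (qcomp c (qs (last h tP), h :: tP)) a /\
    b = qcomp (qcomp c (qs (last hb tH), hb :: tH)) a.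
Proof.
move=> PB nIb Ep Eb.
have [Vp Vb E1 Et] := PB.
have Sp : sorted (@adj Q) p.2 by case/andP: Vp.
exists (p.1, aw), (qt h, cw).
have HV : forall (q : qpath Q), valid_path q = sorted (@adj Q) q.2 && (q.1 == lastv q.2 q.1).
  by move=> [v [|y w]] //=; rewrite eqxx.
have Vp1 : p.1 = lastv p.2 p.1 by move: Vp; rewrite HV => /andP [_ /eqP].
split.
  rewrite /inB; apply/andP; split.
    rewrite HV /=; apply/andP; split.
      by apply: infix_sorted Sp; rewrite Ep catA suffix_infix.
    case: (aw) Ep => [|y r] Ep //=.
    by rewrite {1}Vp1 Ep lastv_cc2.
  apply: contra nIb; apply: inI_infix => /=.
  by rewrite Eb catA suffix_infix.
split.
  rewrite /inB; apply/andP; split.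
    rewrite HV /=; apply/andP; split.
      by apply: infix_sorted Sp; rewrite Ep prefix_infix.
    case: (cw) Ep => [|y r] Ep //=.
    move: Sp; rewrite Ep /= cat_path => /andP [_] /=.
    by case/andP => /eqP ->.
  apply: contra nIb; apply: inI_infix => /=.
  by rewrite Eb prefix_infix.
have Ta : ptgt (p.1, aw) = qs (last h tP).
  rewrite ptgtE /=.
  have := vtxR Vp (l := cw ++ h :: tP) (r := aw); rewrite -catA => /(_ Ep) <-.
  by rewrite (vtxL (r := aw)) -?catA // lastv_cc.
have Tb : ptgt (p.1, aw) = qs (last hb tH).
  rewrite ptgtE /= E1.
  have := vtxR Vb (l := cw ++ hb :: tH) (r := aw); rewrite -catA => /(_ Eb) <-.
  by rewrite (vtxL (r := aw)) -?catA // lastv_cc.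
split => //.
split => //.
split => //.
split.
  rewrite /ptgt /psrc /=.
  have := vtx_pre PB Ep Eb.
  by rewrite (vtxR Vp Ep) (vtxR Vb Eb) /=.
split.
  have -> : p = (p.1, p.2) by case: (p).
  by rewrite Ep /qcomp /= -catA.
have -> : b = (b.1, b.2) by case: (b).
by rewrite Eb -E1 /qcomp /= -catA.
Qed.

End Final.


Theorem mainTheorem12 (K : fieldType) (Q : quiver) (R : seq (seq (Q1 Q)))
    (n : nat) (x : cochain Q K) :
  monomial_rels R -> triangular Q -> fin_dim R ->
  wf_cochain R n x -> (0 < size x)%N -> irreducible R n x ->
  exists pt bt : qpath Q,
    valid_path pt /\ valid_path bt /\ nontrivial pt /\ nontrivial bt /\
    forall e, e \in x ->
      exists a c : qpath Q,
        inB R a /\ inB R c /\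
        ptgt a = psrc pt /\ ptgt pt = psrc c /\
        ptgt a = psrc bt /\ ptgt bt = psrc c /\
        e.2.1 = qcomp (qcomp c pt) a /\ e.2.2 = qcomp (qcomp c bt) a.
Proof.
move=> _ tri _ wf sx irr.
have [e0 e0x] : exists e0, e0 \in x.
  by case: (x) sx => // e0 x' _; exists e0; rewrite mem_head.
have [PB0 [us0 L0] Vb0 Eb01 [Eb0t nI0]] := wf_par wf e0x.
have claim : forall d P H, P != [::] -> (0 < count (hc (K := K) P H) x)%N ->
    (size x - count (hc (K := K) P H) x <= d)%N ->
    exists P' H', P' != [::] /\ {in x, forall e, hc (K := K) P' H' e}.
  elim => [|d IH] P H nP c0 hd.
  - exists P, H; split => //; apply/allP; rewrite all_count eqn_leq count_size /=.
    by rewrite leqn0 subn_eq0 in hd.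
  - case: (ltnP (count (hc (K := K) P H) x) (size x)) => clt.
    + have [P' [H' [nP' lt']]] := step tri wf irr nP c0 clt.
      apply: (IH P' H' nP'); lia.
    + exists P, H; split => //; apply/allP; rewrite all_count eqn_leq count_size /=.
      exact: clt.
have c0 : (0 < count (hc (K := K) e0.2.1.2 e0.2.2.2) x)%N.
  rewrite -has_count; apply/hasP; exists e0 => //; apply/hcP.
  by exists [::], [::]; rewrite !cats0.
have [P' [H' [nP' all']]] := claim (size x) _ _ (G_ne L0) c0 (leq_subr _ _).
have /hcP [cw0 [aw0 [Ep0 Eb0]]] := all' e0 e0x.
have nH' := NE tri PB0 Ep0 Eb0 nP'.
case: P' nP' all' Ep0 Eb0 nH' => // h tP _ all' Ep0 Eb0.
case: H' all' Eb0 => // hb tH all' Eb0 _.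
have [Vp0 _ _ _] := PB0.
exists (qs (last h tP), h :: tP), (qs (last hb tH), hb :: tH).
split.
  rewrite /valid_path; apply/andP; split; last by rewrite /= eqxx.
  have : sorted (@adj Q) e0.2.1.2 by case/andP: Vp0.
  by apply: infix_sorted; rewrite Ep0 infix_infix.
split.
  rewrite /valid_path; apply/andP; split; last by rewrite /= eqxx.
  have : sorted (@adj Q) e0.2.2.2 by case/andP: Vb0.
  by apply: infix_sorted; rewrite Eb0 infix_infix.
split => //.
split => //.
move=> e ex; have [PBe _ _ _ [_ nIe]] := wf_par wf ex.
have /hcP [cw [aw [Ep Eb]]] := all' e ex.
exact: final_e PBe nIe Ep Eb.
Qed.
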